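(* For every safe sentence $F$ there exists a variable-free formula $G$ such that $\mathrm{SM}[F]$ is equivalent to $G\land\mathit{SPP}_{c(F)}$, where $c(F)$ is the set of object constants occurring in $F$.
   Context: Formulas are first-order formulas over a signature with object constants, predicate constants and equality, but no function constants of arity $>0$. Primitive connectives are $\bot,\land,\lor,\rightarrow$, quantifiers $\forall,\exists$; $\neg G$ is $G\rightarrow\bot$, $\top$ is $\bot\rightarrow\bot$, $G\leftrightarrow H$ is $(G\rightarrow H)\land(H\rightarrow G)$. A sentence is a formula without free variables. Stable model operator: for a sentence $F$, let $\mathbf p=p_1,\dots,p_n$ be all predicate constants occurring in $F$ and $\mathbf u=u_1,\dots,u_n$ distinct predicate variables with matching arities. $\mathbf u\le\mathbf p$ is $\bigwedge_i\forall\mathbf x(u_i(\mathbf x)\rightarrow p_i(\mathbf x))$, $\mathbf u=\mathbf p$ is $\bigwedge_i\forall\mathbf x(u_i(\mathbf x)\leftrightarrow p_i(\mathbf x))$, $\mathbf u<\mathbf p$ is $(\mathbf u\le\mathbf p)\land\neg(\mathbf u=\mathbf p)$. $F^*(\mathbf u)$: $p_i(\mathbf t)^*=u_i(\mathbf t)$; $(t_1=t_2)^*=(t_1=t_2)$; $\bot^*=\bot$; $(G\land H)^*=G^*\land H^*$; $(G\lor H)^*=G^*\lor H^*$; $(G\rightarrow H)^*=(G^*\rightarrow H^* )\land(G\rightarrow H)$; $(\forall xG)^*=\forall xG^*$; $(\exists xG)^*=\exists xG^*$. $\mathrm{SM}[F]$ is $F\land\neg\exists\mathbf u((\mathbf u<\mathbf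 p)\land F^*(\mathbf u))$. Restricted variables: for quantifier-free $G$, $\mathrm{RV}(G)$ is: $\emptyset$ if $G$ is an equality between two variables; the set of variables of $G$ if $G$ is any other atomic formula; $\mathrm{RV}(\bot)=\emptyset$; $\mathrm{RV}(G\land H)=\mathrm{RV}(G)\cup\mathrm{RV}(H)$; $\mathrm{RV}(G\lor H)=\mathrm{RV}(G)\cap\mathrm{RV}(H)$; $\mathrm{RV}(G\rightarrow H)=\emptyset$. An occurrence of a subformula or variable is positive if the number of implications containing it in their antecedent is even, negative otherwise, and strictly positive if it is in the antecedent of no implication. A prenex sentence $Q_1x_1\cdots Q_nx_nM$ ($M$ quantifier-free, $x_i$ distinct) is semi-safe if every strictly positive occurrence of every $x_i$ in $M$ belongs to a subformula $G\rightarrow H$ with $x_i\in\mathrm{RV}(G)$. Simplification transformations: $\neg\bot\mapsto\top$, $\neg\top\mapsto\bot$; $\bot\land G\mapsto\bot$, $G\land\bot\mapsto\bot$, $\top\land G\mapsto G$, $G\land\top\mapsto G$; $\bot\lor G\mapsto G$, $G\lor\bot\mapsto G$, $\top\lor G\mapsto\top$, $G\lor\top\mapsto\top$; $\bot\rightarrow G\mapsto\top$, $G\rightarrow\top\mapsto\top$, $\top\rightarrow G\mapsto G$. A variable $x$ is positively (resp. negatively) weakly restricted in a quantifier-free formula $G$ if the formula obtained from $G$ by first replacing every atomic formula $A$ of $G$ with $x\in\mathrm{RV}(A)$ by $\bot$ and then applying the simplification transformations is $\top$ (resp. $\bot$). A semi-safe prenex sentence $Q_1x_1\cdots Q_nx_nM$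 is safe if for every occurrence of every variable $x_i$: (a) if $Q_i=\forall$, the occurrence belongs to a positive subformula (of the sentence) in which $x_i$ is positively weakly restricted, or to a negative subformula in which $x_i$ is negatively weakly restricted; (b) if $Q_i=\exists$, the occurrence belongs to a negative subformula in which $x_i$ is positively weakly restricted, or to a positive subformula in which $x_i$ is negatively weakly restricted. For a finite set $\mathbf c$ of object constants, $\mathit{in}_{\mathbf c}(x_1,\dots,x_m)$ is $\bigwedge_{1\le j\le m}\bigvee_{c\in\mathbf c}x_j=c$, and $\mathit{SPP}_{\mathbf c}$ is the conjunction of $\forall\mathbf x(p_i(\mathbf x)\rightarrow\mathit{in}_{\mathbf c}(\mathbf x))$ over all predicate constants $p_i$ occurring in $F$. *)

(* Defs.v *)
From Stdlib Require Import List Arith Bool.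
Import ListNotations.
Set Implicit Arguments.

Inductive term (C : Type) : Type :=
| Var (x : nat)
| Cst (c : C).
Arguments Var {C} x.
Arguments Cst {C} c.

Inductive form (C P : Type) : Type :=
| FBot
| FAtom (p : P) (ts : list (term C))
| FEq (t1 t2 : term C)
| FAnd (f g : form C P)
| FOr (f g : form C P)
| FImp (f g : form C P)
| FAll (x : nat) (f : form C P)
| FEx (x : nat) (f : form C P).
Arguments FBot {C P}.
Arguments FAtom {C P} p ts.
Arguments FEq {C P} t1 t2.
Arguments FAnd {C P} f g.
Arguments FOr {C P} f g.
Arguments FImp {C P} f g.
Arguments FAll {C P} x f.
Arguments FEx {C P} x f.

Definition FTop {C P} : form C P := FImp FBot FBot.

Fixpoint wf {C P} (ar : P -> nat) (f : form C P) : Prop :=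
  match f with
  | FAtom p ts => length ts = ar p
  | FAnd g h | FOr g h | FImp g h => wf ar g /\ wf ar h
  | FAll _ g | FEx _ g => wf ar g
  | _ => True
  end.

Definition term_hasb {C} (x : nat) (t : term C) : bool :=
  match t with Var y => Nat.eqb y x | Cst _ => false end.

Definition term_is_var {C} (t : term C) : bool :=
  match t with Var _ => true | Cst _ => false end.

Fixpoint free_in {C P} (x : nat) (f : form C P) : Prop :=
  match f with
  | FBot => False
  | FAtom _ ts => existsb (term_hasb x) ts = true
  | FEq t1 t2 => term_hasb x t1 = true \/ term_hasb x t2 = true
  | FAnd g h | FOr g h | FImp g h => free_in x g \/ free_in x h
  | FAll y g | FEx y g => y <> x /\ free_in x g
  end.

Definition sentence {C P} (f : form C P) : Prop := forall x, ~ free_in x f.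

Fixpoint var_free {C P} (f : form C P) : Prop :=
  match f with
  | FBot => True
  | FAtom _ ts => existsb term_is_var ts = false
  | FEq t1 t2 => term_is_var t1 = false /\ term_is_var t2 = false
  | FAnd g h | FOr g h | FImp g h => var_free g /\ var_free h
  | FAll _ _ | FEx _ _ => False
  end.

Definition term_consts {C} (t : term C) : list C :=
  match t with Cst c => [c] | Var _ => [] end.

Fixpoint consts {C P} (f : form C P) : list C :=
  match f with
  | FBot => []
  | FAtom _ ts => flat_map term_consts ts
  | FEq t1 t2 => term_consts t1 ++ term_consts t2
  | FAnd g h | FOr g h | FImp g h => consts g ++ consts h
  | FAll _ g | FEx _ g => consts g
  end.

Fixpoint preds {C P} (f : form C P) : list P :=
  match f with
  | FAtom p _ => [p]
  | FAnd g h | FOr g h | FImp g h => preds g ++ preds h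
  | FAll _ g | FEx _ g => preds g
  | _ => []
  end.

Definition term_val {C D} (ic : C -> D) (env : nat -> D) (t : term C) : D :=
  match t with Var x => env x | Cst c => ic c end.

Definition upd {D} (env : nat -> D) (x : nat) (d : D) : nat -> D :=
  fun y => if Nat.eqb y x then d else env y.

Fixpoint sat {C P D} (ic : C -> D) (ip : P -> list D -> Prop) (env : nat -> D)
  (f : form C P) : Prop :=
  match f with
  | FBot => False
  | FAtom p ts => ip p (map (term_val ic env) ts)
  | FEq t1 t2 => term_val ic env t1 = term_val ic env t2
  | FAnd g h => sat ic ip env g /\ sat ic ip env h
  | FOr g h => sat ic ip env g \/ sat ic ip env h
  | FImp g h => sat ic ip env g -> sat ic ip env h
  | FAll x g => forall d : D, sat ic ip (upd env x d) g
  | FEx x g => exists d : D, sat ic ip (upd env x d) g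
  end.

Fixpoint lift {C P Q} (h : P -> Q) (f : form C P) : form C Q :=
  match f with
  | FBot => FBot
  | FAtom p ts => FAtom (h p) ts
  | FEq t1 t2 => FEq t1 t2
  | FAnd g k => FAnd (lift h g) (lift h k)
  | FOr g k => FOr (lift h g) (lift h k)
  | FImp g k => FImp (lift h g) (lift h k)
  | FAll x g => FAll x (lift h g)
  | FEx x g => FEx x (lift h g)
  end.

(* F*(u): over the signature P + P, where inl p is the constant p and
   inr p is the predicate variable u_p. *)
Fixpoint star {C P} (f : form C P) : form C (P + P) :=
  match f with
  | FBot => FBot
  | FAtom p ts => FAtom (inr p) ts
  | FEq t1 t2 => FEq t1 t2
  | FAnd g h => FAnd (star g) (star h)
  | FOr g h => FOr (star g) (star h)
  | FImp g h => FAnd (FImp (star g) (star h)) (FImp (lift inl g) (lift inl h))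
  | FAll x g => FAll x (star g)
  | FEx x g => FEx x (star g)
  end.

Definition pcombine {P D} (ip U : P -> list D -> Prop) : P + P -> list D -> Prop :=
  fun q => match q with inl p => ip p | inr p => U p end.

(* truth of SM[F] = F /\ ~ exists u ((u < p) /\ F*(u)), written out semantically;
   u ranges over relations of the arities of the p_i (lists of length ar p). *)
Definition sat_SM {C P D} (ar : P -> nat) (ic : C -> D) (ip : P -> list D -> Prop)
  (env : nat -> D) (F : form C P) : Prop :=
  sat ic ip env F /\
  ~ (exists U : P -> list D -> Prop,
       (forall p, In p (preds F) -> forall ds, length ds = ar p -> U p ds -> ip p ds) /\
       ~ (forall p, In p (preds F) -> forall ds, length ds = ar p -> (U p ds <-> ip p ds)) /\
       sat ic (pcombine ip U) env (star F)).

Fixpoint bigand {C P} (l : list (form C P)) : form C P :=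
  match l with [] => FTop | f :: l => FAnd f (bigand l) end.
Fixpoint bigor {C P} (l : list (form C P)) : form C P :=
  match l with [] => FBot | f :: l => FOr f (bigor l) end.

Definition in_c {C P} (cs : list C) (xs : list nat) : form C P :=
  bigand (map (fun x => bigor (map (fun c => FEq (Var x) (Cst c)) cs)) xs).

Fixpoint forall_list {C P} (xs : list nat) (f : form C P) : form C P :=
  match xs with [] => f | x :: xs => FAll x (forall_list xs f) end.

Definition SPP {C P} (ar : P -> nat) (cs : list C) (ps : list P) : form C P :=
  bigand (map (fun p => let xs := seq 0 (ar p) in
                        forall_list xs (FImp (FAtom p (map Var xs)) (in_c cs xs))) ps).

Fixpoint RV {C P} (f : form C P) (x : nat) : bool :=
  match f with
  | FBot => false
  | FAtom _ ts => existsb (term_hasb x) ts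
  | FEq (Var _) (Var _) => false
  | FEq t1 t2 => term_hasb x t1 || term_hasb x t2
  | FAnd g h => RV g x || RV h x
  | FOr g h => RV g x && RV h x
  | FImp _ _ => false
  | FAll _ _ | FEx _ _ => false (* RV is only used on quantifier-free formulas *)
  end.

Fixpoint qfree {C P} (f : form C P) : Prop :=
  match f with
  | FAnd g h | FOr g h | FImp g h => qfree g /\ qfree h
  | FAll _ _ | FEx _ _ => False
  | _ => True
  end.

Inductive quant := QAll | QEx.

Fixpoint prenex {C P} (pre : list (quant * nat)) (M : form C P) : form C P :=
  match pre with
  | [] => M
  | (QAll, x) :: pre => FAll x (prenex pre M)
  | (QEx, x) :: pre => FEx x (prenex pre M)
  end.

(* every strictly positive occurrence of x in f belongs to a subformula G -> H
   with x in RV(G) *)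
Fixpoint sp_restricted {C P} (x : nat) (f : form C P) : Prop :=
  match f with
  | FBot => True
  | FAtom _ ts => existsb (term_hasb x) ts = false
  | FEq t1 t2 => term_hasb x t1 = false /\ term_hasb x t2 = false
  | FAnd g h | FOr g h => sp_restricted x g /\ sp_restricted x h
  | FImp g h => RV g x = true \/ sp_restricted x h
  | FAll _ g | FEx _ g => sp_restricted x g
  end.

Definition is_top {C P} (f : form C P) : bool :=
  match f with FImp FBot FBot => true | _ => false end.
Definition is_bot {C P} (f : form C P) : bool :=
  match f with FBot => true | _ => false end.

Fixpoint repl {C P} (x : nat) (f : form C P) : form C P :=
  match f with
  | FBot => FBot
  | FAtom p ts => if RV (FAtom p ts) x then FBot else FAtom p ts
  | FEq t1 t2 => if RV (@FEq C P t1 t2) x then FBot else FEq t1 t2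
  | FAnd g h => FAnd (repl x g) (repl x h)
  | FOr g h => FOr (repl x g) (repl x h)
  | FImp g h => FImp (repl x g) (repl x h)
  | FAll y g => FAll y (repl x g)
  | FEx y g => FEx y (repl x g)
  end.

(* exhaustive application of the simplification transformations (bottom-up) *)
Fixpoint simp {C P} (f : form C P) : form C P :=
  match f with
  | FAnd g h =>
      let g' := simp g in let h' := simp h in
      if is_bot g' || is_bot h' then FBot
      else if is_top g' then h'
      else if is_top h' then g'
      else FAnd g' h'
  | FOr g h =>
      let g' := simp g in let h' := simp h in
      if is_top g' || is_top h' then FTop
      else if is_bot g' then h'
      else if is_bot h' then g'
      else FOr g' h'
  | FImp g h =>
      let g' := simp g in let h' := simp h in
      if is_bot g' || is_top h' then FTop
      else if is_top g' then h'
      else FImp g' h'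
  | FAll y g => FAll y (simp g)
  | FEx y g => FEx y (simp g)
  | _ => f
  end.

Definition pos_weakly_restricted {C P} (x : nat) (G : form C P) : Prop :=
  is_top (simp (repl x G)) = true.
Definition neg_weakly_restricted {C P} (x : nat) (G : form C P) : Prop :=
  is_bot (simp (repl x G)) = true.

(* every occurrence of x in f (which occurs with polarity pol, true = positive)
   belongs to a subformula H (with its polarity) satisfying cond *)
Fixpoint occ_covered {C P} (cond : bool -> form C P -> Prop) (x : nat) (pol : bool)
  (f : form C P) : Prop :=
  cond pol f \/
  match f with
  | FBot => True
  | FAtom _ ts => existsb (term_hasb x) ts = false
  | FEq t1 t2 => term_hasb x t1 = false /\ term_hasb x t2 = false
  | FAnd g h | FOr g h => occ_covered cond x pol g /\ occ_covered cond x pol h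
  | FImp g h => occ_covered cond x (negb pol) g /\ occ_covered cond x pol h
  | FAll _ g | FEx _ g => occ_covered cond x pol g
  end.

Definition semi_safe_decomp {C P} (pre : list (quant * nat)) (M : form C P) : Prop :=
  qfree M /\ NoDup (map snd pre) /\
  forall x, In x (map snd pre) -> sp_restricted x M.

Definition semi_safe {C P} (F : form C P) : Prop :=
  sentence F /\ exists pre M, F = prenex pre M /\ semi_safe_decomp pre M.

Definition safe {C P} (F : form C P) : Prop :=
  sentence F /\
  exists pre M, F = prenex pre M /\ semi_safe_decomp pre M /\
    (forall x, In (QAll, x) pre ->
       occ_covered (fun pol H => (pol = true /\ pos_weakly_restricted x H) \/
                                 (pol = false /\ neg_weakly_restricted x H)) x true M) /\
    (forall x, In (QEx, x) pre ->
       occ_covered (fun pol H => (pol = false /\ pos_weakly_restricted x H) \/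
                                 (pol = true /\ neg_weakly_restricted x H)) x true M).

(* Main.v *)
Require Import Defs.
From Stdlib Require Import List.
From Stdlib Require Import Arith Bool Lia Classical FunctionalExtensionality.
Import ListNotations.

Fixpoint okf {C P} (ar : P -> nat) (ps : list P) (f : form C P) : Prop :=
  match f with
  | FAtom p ts => In p ps /\ length ts = ar p
  | FAnd g h | FOr g h | FImp g h => okf ar ps g /\ okf ar ps h
  | FAll _ g | FEx _ g => okf ar ps g
  | _ => True
  end.

Lemma upd_same {D} (env : nat -> D) x d : upd env x d x = d.
Proof. unfold upd. now rewrite Nat.eqb_refl. Qed.

Lemma upd_comm {D} (env : nat -> D) x y a b : x <> y ->
  upd (upd env x a) y b = upd (upd env y b) x a.
Proof.
  intros H. apply functional_extensionality; intro v. unfold upd.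
  destruct (Nat.eqb_spec v y), (Nat.eqb_spec v x); subst; auto. congruence.
Qed.

Lemma upd_idem {D} (env : nat -> D) x a b : upd (upd env x a) x b = upd env x b.
Proof.
  apply functional_extensionality; intro v. unfold upd.
  destruct (Nat.eqb_spec v x); auto.
Qed.

Section Sem.
Context {C P D : Type} (ic : C -> D).

Fixpoint satS (ip U : P -> list D -> Prop) (env : nat -> D) (f : form C P) : Prop :=
  match f with
  | FBot => False
  | FAtom p ts => U p (map (term_val ic env) ts)
  | FEq t1 t2 => term_val ic env t1 = term_val ic env t2
  | FAnd g h => satS ip U env g /\ satS ip U env h
  | FOr g h => satS ip U env g \/ satS ip U env h
  | FImp g h => (satS ip U env g -> satS ip U env h) /\ (sat ic ip env g -> sat ic ip env h)
  | FAll x g => forall d, satS ip U (upd env x d) g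
  | FEx x g => exists d, satS ip U (upd env x d) g
  end.

Lemma satS_sat (ip : P -> list D -> Prop) : forall f env, satS ip ip env f <-> sat ic ip env f.
Proof.
  induction f; intro env; cbn; try tauto.
  - specialize (IHf1 env); specialize (IHf2 env); tauto.
  - specialize (IHf1 env); specialize (IHf2 env); tauto.
  - specialize (IHf1 env); specialize (IHf2 env); tauto.
  - split; intros H d; apply IHf, H.
  - split; intros [d H]; exists d; apply IHf, H.
Qed.

Lemma sat_lift (ip U : P -> list D -> Prop) : forall f env,
  sat ic (pcombine ip U) env (lift inl f) <-> sat ic ip env f.
Proof.
  induction f; intro env; cbn; try tauto.
  - specialize (IHf1 env); specialize (IHf2 env); tauto.
  - specialize (IHf1 env); specialize (IHf2 env); tauto.
  - specialize (IHf1 env); specialize (IHf2 env); tauto.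
  - split; intros H d; apply IHf, H.
  - split; intros [d H]; exists d; apply IHf, H.
Qed.

Lemma sat_star (ip U : P -> list D -> Prop) : forall f env,
  sat ic (pcombine ip U) env (star f) <-> satS ip U env f.
Proof.
  induction f; intro env; cbn; try tauto.
  - specialize (IHf1 env); specialize (IHf2 env); tauto.
  - specialize (IHf1 env); specialize (IHf2 env); tauto.
  - specialize (IHf1 env); specialize (IHf2 env).
    pose proof (sat_lift ip U f1 env); pose proof (sat_lift ip U f2 env); tauto.
  - split; intros H d; apply IHf, H.
  - split; intros [d H]; exists d; apply IHf, H.
Qed.

Lemma satS_env (ip U : P -> list D -> Prop) : forall f env1 env2,
  (forall x, free_in x f -> env1 x = env2 x) ->
  satS ip U env1 f <-> satS ip U env2 f.
Proof.
  assert (Ht : forall env1 env2 t, (forall x, term_hasb x t = true -> env1 x = env2 x) ->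
            term_val ic env1 t = term_val ic env2 t).
  { intros e1 e2 [y|c] H; cbn; auto. apply H. cbn. apply Nat.eqb_refl. }
  intros f. revert U.
  induction f; intros U env1 env2 H; cbn in *; try tauto.
  - replace (map (term_val ic env1) ts) with (map (term_val ic env2) ts); [tauto|].
    apply map_ext_in. intros t Ht'. symmetry. apply Ht. intros x Hx. apply H.
    apply existsb_exists. eauto.
  - rewrite (Ht env1 env2 t1), (Ht env1 env2 t2); [tauto| |]; intros; apply H; auto.
  - rewrite (IHf1 U env1 env2), (IHf2 U env1 env2); [tauto| |]; intros; apply H; auto.
  - rewrite (IHf1 U env1 env2), (IHf2 U env1 env2); [tauto| |]; intros; apply H; auto.
  - rewrite (IHf1 U env1 env2), (IHf2 U env1 env2), <- !satS_sat,
      (IHf1 ip env1 env2), (IHf2 ip env1 env2); [tauto| | | |]; intros; apply H; auto.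
  - assert (E : forall d, satS ip U (upd env1 x d) f <-> satS ip U (upd env2 x d) f).
    { intro d. apply IHf. intros v Hv; unfold upd; destruct (Nat.eqb_spec v x); auto. }
    split; intros H' d; apply E; auto.
  - assert (E : forall d, satS ip U (upd env1 x d) f <-> satS ip U (upd env2 x d) f).
    { intro d. apply IHf. intros v Hv; unfold upd; destruct (Nat.eqb_spec v x); auto. }
    split; intros [d H']; exists d; apply E; auto.
Qed.

End Sem.

Lemma is_top_eq {C P} (g : form C P) : is_top g = true -> g = FTop.
Proof. destruct g; try discriminate; destruct g1, g2; try discriminate; reflexivity. Qed.
Lemma is_bot_eq {C P} (g : form C P) : is_bot g = true -> g = FBot.
Proof. destruct g; try discriminate; reflexivity. Qed.

Lemma existsb_false_in {A} (f : A -> bool) l t : existsb f l = false -> In t l -> f t = false.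
Proof.
  intros H Hi. destruct (f t) eqn:E; auto. exfalso.
  assert (existsb f l = true) by (apply existsb_exists; eauto). congruence.
Qed.

Lemma okf_repl {C P} ar ps x : forall f : form C P, okf ar ps f -> okf ar ps (repl x f).
Proof.
  induction f; cbn [repl okf]; intros; try tauto;
  match goal with |- context [if ?b then _ else _] => destruct b end; cbn; auto.
Qed.

Definition condA {C P} (x : nat) : bool -> form C P -> Prop :=
  fun pol H => (pol = true /\ pos_weakly_restricted x H) \/ (pol = false /\ neg_weakly_restricted x H).
Definition condE {C P} (x : nat) : bool -> form C P -> Prop :=
  fun pol H => (pol = false /\ pos_weakly_restricted x H) \/ (pol = true /\ neg_weakly_restricted x H).

Lemma occ_flip {C P} (c1 c2 : bool -> form C P -> Prop) x :
  (forall b H, c1 b H -> c2 (negb b) H) ->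
  forall f pol, occ_covered c1 x pol f -> occ_covered c2 x (negb pol) f.
Proof.
  intros Hc. induction f; intros pol [H|H]; try (left; now apply Hc); right; cbn in *; try tauto.
  - split; [apply IHf1|apply IHf2]; tauto.
  - split; [apply IHf1|apply IHf2]; tauto.
  - split; [apply (IHf1 (negb pol))|apply IHf2]; tauto.
  - apply IHf; auto.
  - apply IHf; auto.
Qed.

Lemma condE_A {C P} x : forall b (H : form C P), condE x b H -> condA x (negb b) H.
Proof. unfold condE, condA. intros [|] H; cbn; intuition discriminate. Qed.

Section Single.
Context {C P D : Type} (ar : P -> nat) (ps : list P) (cs : list C) (ic : C -> D).

Definition N (d : D) := exists c, In c cs /\ d = ic c.
Definition sppK (K : P -> list D -> Prop) :=
  forall p ds, In p ps -> length ds = ar p -> K p ds -> forall d, In d ds -> N d.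
Definition HUr (ip U : P -> list D -> Prop) :=
  forall p ds, In p ps -> length ds = ar p -> U p ds -> ip p ds.

Lemma HUr_refl ip : HUr ip ip.
Proof. unfold HUr; auto. Qed.

Lemma sppK_U ip U : sppK ip -> HUr ip U -> sppK U.
Proof. unfold sppK, HUr; eauto. Qed.

Lemma satS_to_sat ip U : HUr ip U -> forall f env, okf ar ps f -> satS ic ip U env f -> sat ic ip env f.
Proof.
  intros HU. induction f; intros env Hok; cbn in *; try tauto.
  - intros H. destruct Hok as [? ?]. apply (HU p); [auto| rewrite length_map; auto | auto].
  - intros [? ?]; split; [apply IHf1|apply IHf2]; tauto.
  - intros [?|?]; [left; apply IHf1|right; apply IHf2]; tauto.
  - intros H d; apply IHf; auto.
  - intros [d H]; exists d; apply IHf; auto.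
Qed.

Lemma RV_false J K : sppK K -> forall (f : form C P) env x, okf ar ps f -> incl (consts f) cs ->
  RV f x = true -> ~ N (env x) -> ~ satS ic J K env f.
Proof.
  intros HK. induction f as [| | | | | |y f IHf|y f IHf]; intros env x Hok Hc Hrv Hn; cbn in *; try discriminate.
  - intros H. apply Hn. destruct Hok as [Hp Hl].
    apply (HK p (map (term_val ic env) ts)); auto. now rewrite length_map.
    apply existsb_exists in Hrv. destruct Hrv as [t [Ht Hx]].
    destruct t as [y|c]; cbn in Hx; try discriminate. apply Nat.eqb_eq in Hx; subst.
    change (env x) with (term_val ic env (Var x)). now apply in_map.
  - destruct t1 as [a|c], t2 as [b|c']; cbn in *; try discriminate.
    + rewrite orb_false_r in Hrv. apply Nat.eqb_eq in Hrv; subst. intros E; apply Hn.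
      exists c'. split; auto. apply Hc; now left.
    + apply Nat.eqb_eq in Hrv; subst. intros E; apply Hn.
      exists c. split; auto. apply Hc; now left.
  - apply incl_app_inv in Hc. apply orb_true_iff in Hrv.
    intros [H1 H2]. destruct Hrv; [eapply IHf1|eapply IHf2]; eauto; tauto.
  - apply incl_app_inv in Hc. apply andb_true_iff in Hrv.
    intros [H1|H2]; [eapply IHf1|eapply IHf2]; eauto; tauto.
Qed.

Lemma simp_sound ip : forall f, okf ar ps f -> forall U, HUr ip U -> forall env,
  satS ic ip U env (simp f) <-> satS ic ip U env f.
Proof.
  induction f; intros Hok U HU env; cbn [okf] in Hok; try (cbn; tauto).
  - destruct Hok as [Ho1 Ho2].
    pose proof (IHf1 Ho1 U HU env) as I1. pose proof (IHf2 Ho2 U HU env) as I2.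
    cbn [simp].
    destruct (is_bot (simp f1)) eqn:B1; [apply is_bot_eq in B1; rewrite B1 in I1; cbn in *; tauto|].
    destruct (is_bot (simp f2)) eqn:B2; [apply is_bot_eq in B2; rewrite B2 in I2; cbn in *; tauto|].
    cbn [orb].
    destruct (is_top (simp f1)) eqn:T1; [apply is_top_eq in T1; rewrite T1 in I1; cbn in *; tauto|].
    destruct (is_top (simp f2)) eqn:T2; [apply is_top_eq in T2; rewrite T2 in I2; cbn in *; tauto|].
    cbn in *; tauto.
  - destruct Hok as [Ho1 Ho2].
    pose proof (IHf1 Ho1 U HU env) as I1. pose proof (IHf2 Ho2 U HU env) as I2.
    cbn [simp].
    destruct (is_top (simp f1)) eqn:B1; [apply is_top_eq in B1; rewrite B1 in I1; cbn in *; tauto|].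
    destruct (is_top (simp f2)) eqn:B2; [apply is_top_eq in B2; rewrite B2 in I2; cbn in *; tauto|].
    cbn [orb].
    destruct (is_bot (simp f1)) eqn:T1; [apply is_bot_eq in T1; rewrite T1 in I1; cbn in *; tauto|].
    destruct (is_bot (simp f2)) eqn:T2; [apply is_bot_eq in T2; rewrite T2 in I2; cbn in *; tauto|].
    cbn in *; tauto.
  - destruct Hok as [Ho1 Ho2].
    pose proof (IHf1 Ho1 U HU env) as I1. pose proof (IHf2 Ho2 U HU env) as I2.
    pose proof (IHf1 Ho1 ip (HUr_refl ip) env) as J1. pose proof (IHf2 Ho2 ip (HUr_refl ip) env) as J2.
    rewrite !satS_sat in J1, J2.
    pose proof (satS_to_sat ip U HU f2 env Ho2) as Hto.
    cbn [simp].
    destruct (is_bot (simp f1)) eqn:B1; [apply is_bot_eq in B1; rewrite B1 in I1, J1; cbn in *; tauto|].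
    destruct (is_top (simp f2)) eqn:B2; [apply is_top_eq in B2; rewrite B2 in I2, J2; cbn in *; tauto|].
    cbn [orb].
    destruct (is_top (simp f1)) eqn:T1; [apply is_top_eq in T1; rewrite T1 in I1, J1; cbn in *; tauto|].
    cbn in *. tauto.
  - cbn. split; intros H d; apply IHf; auto.
  - cbn. split; intros [d H]; exists d; apply IHf; auto.
Qed.


Lemma repl_sound ip : sppK ip -> forall f, qfree f -> okf ar ps f -> incl (consts f) cs ->
  forall U, HUr ip U -> forall env x, ~ N (env x) ->
  satS ic ip U env (repl x f) <-> satS ic ip U env f.
Proof.
  intros Hspp. induction f as [| | | | | |y f IHf|y f IHf]; intros Hq Hok Hc U HU env x Hn; cbn [qfree okf consts] in *; try tauto.
  - change (repl x (FAtom p ts)) with (if RV (@FAtom C P p ts) x then FBot else FAtom p ts).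
    destruct (RV (FAtom p ts) x) eqn:E; [|tauto].
    cbn [satS]. split; [tauto|]. intros H. exact (RV_false ip U (sppK_U ip U Hspp HU) (FAtom p ts) env x Hok Hc E Hn H).
  - change (repl x (FEq t1 t2)) with (if RV (@FEq C P t1 t2) x then (@FBot C P) else (@FEq C P t1 t2)).
    destruct (RV (@FEq C P t1 t2) x) eqn:E; [|tauto].
    cbn [satS]. split; [tauto|]. intros H. exact (RV_false ip U (sppK_U ip U Hspp HU) (FEq t1 t2) env x Hok Hc E Hn H).
  - apply incl_app_inv in Hc. cbn. rewrite IHf1, IHf2; tauto.
  - apply incl_app_inv in Hc. cbn. rewrite IHf1, IHf2; tauto.
  - apply incl_app_inv in Hc. cbn.
    rewrite <- !satS_sat.
    rewrite (IHf1 ltac:(tauto) ltac:(tauto) ltac:(tauto) U HU env x Hn),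
            (IHf2 ltac:(tauto) ltac:(tauto) ltac:(tauto) U HU env x Hn),
            (IHf1 ltac:(tauto) ltac:(tauto) ltac:(tauto) ip (HUr_refl ip) env x Hn),
            (IHf2 ltac:(tauto) ltac:(tauto) ltac:(tauto) ip (HUr_refl ip) env x Hn).
    tauto.
Qed.

Lemma pwr_true ip U : sppK ip -> HUr ip U -> forall f env x, qfree f -> okf ar ps f -> incl (consts f) cs ->
  ~ N (env x) -> pos_weakly_restricted x f -> satS ic ip U env f.
Proof.
  intros Hs HU f env x Hq Hok Hc Hn Hp. unfold pos_weakly_restricted in Hp.
  apply is_top_eq in Hp.
  apply (repl_sound ip Hs f Hq Hok Hc U HU env x Hn).
  apply (simp_sound ip (repl x f) (okf_repl ar ps x f Hok) U HU env).
  rewrite Hp. cbn. tauto.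
Qed.

Lemma nwr_false ip U : sppK ip -> HUr ip U -> forall f env x, qfree f -> okf ar ps f -> incl (consts f) cs ->
  ~ N (env x) -> neg_weakly_restricted x f -> ~ satS ic ip U env f.
Proof.
  intros Hs HU f env x Hq Hok Hc Hn Hp H. unfold neg_weakly_restricted in Hp.
  apply is_bot_eq in Hp.
  apply (repl_sound ip Hs f Hq Hok Hc U HU env x Hn) in H.
  apply (simp_sound ip (repl x f) (okf_repl ar ps x f Hok) U HU env) in H.
  rewrite Hp in H. exact H.
Qed.

Lemma term_upd (env : nat -> D) x a d t : term_hasb x t = false ->
  term_val ic (upd env x a) t = term_val ic (upd env x d) t.
Proof.
  destruct t as [y|c]; cbn; auto. intros H. unfold upd. now rewrite H.
Qed.

Lemma mono ip (Hspp : sppK ip) x : forall f pol, qfree f -> okf ar ps f -> incl (consts f) cs ->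
  occ_covered (condA x) x pol f -> forall U, HUr ip U -> forall env a d, ~ N d ->
  if pol then (satS ic ip U (upd env x a) f -> satS ic ip U (upd env x d) f)
  else (satS ic ip U (upd env x d) f -> satS ic ip U (upd env x a) f).
Proof.
  induction f; intros pol Hq Hok Hc Hocc U HU env a d Hd;
    (destruct Hocc as [Hcond|Hocc];
     [ destruct Hcond as [[-> Hp]|[-> Hp]];
       [ intros _; eapply pwr_true; eauto; now rewrite upd_same
       | intros H; exfalso; eapply nwr_false; eauto; now rewrite upd_same ] | ]);
    cbn [qfree okf consts] in *.
  - destruct pol; auto.
  - assert (E : map (term_val ic (upd env x a)) ts = map (term_val ic (upd env x d)) ts).
    { apply map_ext_in. intros t Ht. apply term_upd. eapply existsb_false_in; eauto. }
    cbn. rewrite E. destruct pol; auto.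
  - cbn. rewrite (term_upd env x a d t1), (term_upd env x a d t2) by tauto. destruct pol; auto.
  - apply incl_app_inv in Hc.
    pose proof (IHf1 pol ltac:(tauto) ltac:(tauto) ltac:(tauto) ltac:(tauto) U HU env a d Hd).
    pose proof (IHf2 pol ltac:(tauto) ltac:(tauto) ltac:(tauto) ltac:(tauto) U HU env a d Hd).
    destruct pol; cbn in *; tauto.
  - apply incl_app_inv in Hc.
    pose proof (IHf1 pol ltac:(tauto) ltac:(tauto) ltac:(tauto) ltac:(tauto) U HU env a d Hd).
    pose proof (IHf2 pol ltac:(tauto) ltac:(tauto) ltac:(tauto) ltac:(tauto) U HU env a d Hd).
    destruct pol; cbn in *; tauto.
  - apply incl_app_inv in Hc.
    pose proof (IHf1 (negb pol) ltac:(tauto) ltac:(tauto) ltac:(tauto) ltac:(tauto) U HU env a d Hd) as A1.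
    pose proof (IHf2 pol ltac:(tauto) ltac:(tauto) ltac:(tauto) ltac:(tauto) U HU env a d Hd) as A2.
    pose proof (IHf1 (negb pol) ltac:(tauto) ltac:(tauto) ltac:(tauto) ltac:(tauto) ip (HUr_refl ip) env a d Hd) as B1.
    pose proof (IHf2 pol ltac:(tauto) ltac:(tauto) ltac:(tauto) ltac:(tauto) ip (HUr_refl ip) env a d Hd) as B2.
    destruct pol; cbn in *; rewrite !satS_sat in B1, B2; tauto.
  - contradiction.
  - contradiction.
Qed.

Lemma lift_pre (M : form C P) ip U x a d : forall pre, ~ In x (map snd pre) ->
  (forall env, satS ic ip U (upd env x a) M -> satS ic ip U (upd env x d) M) ->
  forall env, satS ic ip U (upd env x a) (prenex pre M) -> satS ic ip U (upd env x d) (prenex pre M).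
Proof.
  induction pre as [|[q y] pre IH]; intros Hn HM env; cbn [prenex]; auto.
  cbn in Hn. assert (Hxy : y <> x) by tauto.
  destruct q; cbn.
  - intros H e. rewrite upd_comm by auto. apply IH; auto. rewrite <- upd_comm by auto. apply H.
  - intros [e H]. exists e. rewrite upd_comm by auto. apply IH; auto. rewrite <- upd_comm by auto. apply H.
Qed.

Lemma Lall_pre (M : form C P) ip U x : sppK ip -> HUr ip U -> qfree M -> okf ar ps M -> incl (consts M) cs ->
  occ_covered (condA x) x true M ->
  forall pre, ~ In x (map snd pre) -> forall env a d, ~ N d ->
  satS ic ip U (upd env x a) (prenex pre M) -> satS ic ip U (upd env x d) (prenex pre M).
Proof.
  intros Hs HU Hq Hok Hc Hocc pre Hn env a d Hd. apply lift_pre; auto.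
  intros e. exact (mono ip Hs x M true Hq Hok Hc Hocc U HU e a d Hd).
Qed.

Lemma Lex_pre (M : form C P) ip U x : sppK ip -> HUr ip U -> qfree M -> okf ar ps M -> incl (consts M) cs ->
  occ_covered (condE x) x true M ->
  forall pre, ~ In x (map snd pre) -> forall env a d, ~ N d ->
  satS ic ip U (upd env x d) (prenex pre M) -> satS ic ip U (upd env x a) (prenex pre M).
Proof.
  intros Hs HU Hq Hok Hc Hocc pre Hn env a d Hd. apply lift_pre; auto.
  intros e. apply (occ_flip _ _ x (condE_A x) M true) in Hocc.
  exact (mono ip Hs x M false Hq Hok Hc Hocc U HU e a d Hd).
Qed.

Definition U0 (ip : P -> list D -> Prop) : P -> list D -> Prop :=
  fun p ds => ip p ds /\ forall d, In d ds -> N d.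

Lemma stepA_qf ip : forall f, qfree f -> okf ar ps f -> incl (consts f) cs -> forall env,
  (forall x, ~ N (env x) -> sp_restricted x f) -> sat ic ip env f -> satS ic ip (U0 ip) env f.
Proof.
  assert (HU : HUr ip (U0 ip)) by (intros p ds _ _ [H _]; exact H).
  assert (Hs : sppK (U0 ip)) by (intros p ds _ _ [_ H]; exact H).
  induction f; intros Hq Hok Hc env Hsp; cbn [qfree okf consts] in *; try tauto.
  - intros H. split; auto. intros d Hd. apply in_map_iff in Hd. destruct Hd as [t [<- Ht]].
    destruct t as [y|c]; cbn.
    + apply NNPP. intros Hn. specialize (Hsp y Hn). cbn in Hsp.
      assert (term_hasb y (@Var C y) = true) by (cbn; apply Nat.eqb_refl).
      pose proof (existsb_false_in _ _ _ Hsp Ht). congruence.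
    + exists c. split; auto. apply Hc. apply in_flat_map. exists (Cst c). cbn; auto.
  - apply incl_app_inv in Hc. destruct Hq, Hok, Hc. intros [G1 G2]. cbn.
    split; [apply IHf1|apply IHf2]; auto; intros x Hx; apply (Hsp x Hx).
  - apply incl_app_inv in Hc. destruct Hq, Hok, Hc. intros [G1|G2]; cbn; [left; apply IHf1|right; apply IHf2]; auto;
      intros x Hx; apply (Hsp x Hx).
  - apply incl_app_inv in Hc. intros H. cbn. split; auto.
    intros H1. apply IHf2; try tauto.
    + intros x Hx. destruct (Hsp x Hx) as [Hr|Hr]; auto. exfalso.
      eapply (RV_false ip (U0 ip) Hs f1 env x); eauto; tauto.
    + apply H. eapply satS_to_sat; eauto; tauto.
Qed.

Lemma stepA_pre ip (M : form C P) : qfree M -> okf ar ps M -> incl (consts M) cs ->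
  (forall x, sp_restricted x M) ->
  forall pre env, sat ic ip env (prenex pre M) -> satS ic ip (U0 ip) env (prenex pre M).
Proof.
  intros Hq Hok Hc Hsp. induction pre as [|[[|] y] pre IH]; intros env; cbn [prenex].
  - apply stepA_qf; auto.
  - cbn. intros H d. apply IH, H.
  - cbn. intros [d H]. exists d. apply IH, H.
Qed.

End Single.

Section Two.
Context {C P D1 D2 : Type} (ar : P -> nat) (ps : list P) (cs : list C)
  (ic1 : C -> D1) (ic2 : C -> D2) (R : D1 -> D2 -> Prop)
  (HReq : forall a1 a2 b1 b2, R a1 a2 -> R b1 b2 -> (a1 = b1 <-> a2 = b2))
  (HRc : forall c, In c cs -> R (ic1 c) (ic2 c)).

Definition transR (K1 : P -> list D1 -> Prop) (K2 : P -> list D2 -> Prop) :=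
  forall p ds1 ds2, In p ps -> length ds1 = ar p -> Forall2 R ds1 ds2 -> (K1 p ds1 <-> K2 p ds2).

Lemma term_R env1 env2 t : (forall v, R (env1 v) (env2 v)) -> incl (term_consts t) cs ->
  R (term_val ic1 env1 t) (term_val ic2 env2 t).
Proof. destruct t as [y|c]; cbn; auto. intros _ H. apply HRc, H. now left. Qed.

Lemma map_R env1 env2 : (forall v, R (env1 v) (env2 v)) -> forall ts,
  incl (flat_map term_consts ts) cs ->
  Forall2 R (map (term_val ic1 env1) ts) (map (term_val ic2 env2) ts).
Proof.
  intros He. induction ts as [|t ts IH]; cbn; intros Hc; constructor.
  - apply term_R; auto. intros c Hc'. apply Hc, in_or_app; auto.
  - apply IH. intros c Hc'. apply Hc, in_or_app; auto.
Qed.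

Lemma Rall_upd (env1 : nat -> D1) env2 x a b : (forall v, R (env1 v) (env2 v)) -> R a b ->
  forall v, R (upd env1 x a v) (upd env2 x b v).
Proof. intros H Hab v. unfold upd. destruct (Nat.eqb v x); auto. Qed.

Lemma base : forall f : form C P, qfree f -> okf ar ps f -> incl (consts f) cs ->
  forall ip1 ip2, transR ip1 ip2 -> forall K1 K2, transR K1 K2 ->
  forall env1 env2, (forall v, R (env1 v) (env2 v)) ->
  (satS ic1 ip1 K1 env1 f <-> satS ic2 ip2 K2 env2 f).
Proof.
  induction f as [| | | | | |y f IHf|y f IHf]; intros Hq Hok Hc ip1 ip2 Hip K1 K2 HK env1 env2 He;
    cbn [qfree okf consts] in *; try contradiction.
  - cbn; tauto.
  - cbn. destruct Hok as [Hp Hl]. apply HK; auto.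
    + now rewrite length_map.
    + apply map_R; auto.
  - cbn. apply incl_app_inv in Hc. destruct Hc.
    apply HReq; apply term_R; auto.
  - apply incl_app_inv in Hc. destruct Hq as [q1 q2], Hok as [o1 o2], Hc as [c1 c2]. cbn.
    rewrite (IHf1 q1 o1 c1 ip1 ip2 Hip K1 K2 HK env1 env2 He), (IHf2 q2 o2 c2 ip1 ip2 Hip K1 K2 HK env1 env2 He). tauto.
  - apply incl_app_inv in Hc. destruct Hq as [q1 q2], Hok as [o1 o2], Hc as [c1 c2]. cbn.
    rewrite (IHf1 q1 o1 c1 ip1 ip2 Hip K1 K2 HK env1 env2 He), (IHf2 q2 o2 c2 ip1 ip2 Hip K1 K2 HK env1 env2 He). tauto.
  - apply incl_app_inv in Hc. destruct Hq as [q1 q2], Hok as [o1 o2], Hc as [c1 c2]. cbn.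
    rewrite <- !satS_sat.
    rewrite (IHf1 q1 o1 c1 ip1 ip2 Hip K1 K2 HK env1 env2 He), (IHf2 q2 o2 c2 ip1 ip2 Hip K1 K2 HK env1 env2 He),
      (IHf1 q1 o1 c1 ip1 ip2 Hip ip1 ip2 Hip env1 env2 He), (IHf2 q2 o2 c2 ip1 ip2 Hip ip1 ip2 Hip env1 env2 He). tauto.
Qed.

Lemma transfer_pre (M : form C P) : qfree M -> okf ar ps M -> incl (consts M) cs ->
  forall ip1 ip2 U1 U2, sppK ar ps cs ic1 ip1 -> sppK ar ps cs ic2 ip2 ->
  HUr ar ps ip1 U1 -> HUr ar ps ip2 U2 -> transR ip1 ip2 -> transR U1 U2 ->
  forall pre, NoDup (map snd pre) ->
  (forall x, In (QAll, x) pre -> occ_covered (condA x) x true M) ->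
  (forall x, In (QEx, x) pre -> occ_covered (condE x) x true M) ->
  forall env1 env2, (forall v, R (env1 v) (env2 v)) ->
  satS ic1 ip1 U1 env1 (prenex pre M) -> satS ic2 ip2 U2 env2 (prenex pre M).
Proof.
  intros Hq Hok Hc ip1 ip2 U1 U2 Hs1 Hs2 HU1 HU2 Hip HU pre.
  induction pre as [|[q x] pre IH]; intros Hnd HA HE env1 env2 He; cbn [prenex].
  - apply base; auto.
  - cbn in Hnd. apply NoDup_cons_iff in Hnd. destruct Hnd as [Hnin Hnd].
    assert (HA' : forall x, In (QAll, x) pre -> occ_covered (condA x) x true M)
      by (intros; apply HA; now right).
    assert (HE' : forall x, In (QEx, x) pre -> occ_covered (condE x) x true M)
      by (intros; apply HE; now right).
    destruct q; cbn.
    + intros H d2. destruct (classic (N cs ic2 d2)) as [[c [Hc' ->]]|Hn].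
      * apply (IH Hnd HA' HE' (upd env1 x (ic1 c))); [apply Rall_upd; auto|apply H].
      * apply (Lall_pre ar ps cs ic2 M ip2 U2 x Hs2 HU2 Hq Hok Hc (HA x (or_introl eq_refl))
                 pre Hnin env2 (env2 0) d2 Hn).
        apply (IH Hnd HA' HE' (upd env1 x (env1 0))); [apply Rall_upd; auto|apply H].
    + intros [d1 H]. destruct (classic (N cs ic1 d1)) as [[c [Hc' ->]]|Hn].
      * exists (ic2 c). apply (IH Hnd HA' HE' (upd env1 x (ic1 c))); [apply Rall_upd; auto|apply H].
      * exists (env2 0). apply (IH Hnd HA' HE' (upd env1 x (env1 0))); [apply Rall_upd; auto|].
        apply (Lex_pre ar ps cs ic1 M ip1 U1 x Hs1 HU1 Hq Hok Hc (HE x (or_introl eq_refl))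
                 pre Hnin env1 (env1 0) d1 Hn H).
Qed.

End Two.

Lemma wf_okf {C P} ar ps : forall f : form C P, wf ar f -> incl (preds f) ps -> okf ar ps f.
Proof.
  induction f; cbn; intros Hw Hp; try tauto.
  - split; auto. apply Hp; now left.
  - apply incl_app_inv in Hp; split; [apply IHf1|apply IHf2]; tauto.
  - apply incl_app_inv in Hp; split; [apply IHf1|apply IHf2]; tauto.
  - apply incl_app_inv in Hp; split; [apply IHf1|apply IHf2]; tauto.
Qed.

Lemma prenex_wf {C P} ar (M : form C P) : forall pre, wf ar (prenex pre M) -> wf ar M.
Proof. induction pre as [|[[|] y] pre IH]; cbn; auto. Qed.
Lemma prenex_preds {C P} (M : form C P) : forall pre, preds (prenex pre M) = preds M.
Proof. induction pre as [|[[|] y] pre IH]; cbn; auto. Qed.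
Lemma prenex_consts {C P} (M : form C P) : forall pre, consts (prenex pre M) = consts M.
Proof. induction pre as [|[[|] y] pre IH]; cbn; auto. Qed.

Lemma free_prenex {C P} (M : form C P) x : forall pre, ~ In x (map snd pre) -> free_in x M ->
  free_in x (prenex pre M).
Proof.
  induction pre as [|[[|] y] pre IH]; cbn; intros Hn Hf; auto; split; auto.
Qed.

Lemma notfree_sp {C P} x : forall f : form C P, qfree f -> ~ free_in x f -> sp_restricted x f.
Proof.
  induction f; cbn; intros Hq Hf; try tauto.
  - destruct (existsb (term_hasb x) ts); tauto.
  - destruct (term_hasb x t1), (term_hasb x t2); tauto.
Qed.

Section SPPsem.
Context {C P D : Type} (ic : C -> D) (ip : P -> list D -> Prop).

Lemma sat_bigand env : forall l : list (form C P), sat ic ip env (bigand l) <-> forall f, In f l -> sat ic ip env f.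
Proof.
  induction l as [|f l IH]; cbn.
  - split; [tauto|intros _ H; exact H].
  - rewrite IH. split; [intros [H1 H2] g [<-|Hg]; auto|intros H; split; auto].
Qed.

Lemma sat_bigor env : forall l : list (form C P), sat ic ip env (bigor l) <-> exists f, In f l /\ sat ic ip env f.
Proof.
  induction l as [|f l IH]; cbn.
  - split; [tauto|intros [f [[] _]]].
  - rewrite IH. split.
    + intros [H|[g [Hg H]]]; eauto.
    + intros [g [[<-|Hg] H]]; eauto.
Qed.

Lemma sat_in_c env cs xs : sat ic ip env (@in_c C P cs xs) <->
  forall x, In x xs -> exists c, In c cs /\ env x = ic c.
Proof.
  unfold in_c. rewrite sat_bigand. split.
  - intros H x Hx. specialize (H _ (in_map _ _ _ Hx)). apply sat_bigor in H.
    destruct H as [f [Hf H]]. apply in_map_iff in Hf. destruct Hf as [c [<- Hc]].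
    exists c; split; auto.
  - intros H f Hf. apply in_map_iff in Hf. destruct Hf as [x [<- Hx]].
    apply sat_bigor. destruct (H x Hx) as [c [Hc E]].
    exists (FEq (Var x) (Cst c)). split; auto. apply in_map_iff. eauto.
Qed.

Fixpoint updl (env : nat -> D) (k : nat) (ds : list D) : nat -> D :=
  match ds with [] => env | d :: ds => updl (upd env k d) (S k) ds end.

Lemma updl_lt : forall ds env k v, v < k -> updl env k ds v = env v.
Proof.
  induction ds as [|d ds IH]; cbn; intros env k v Hv; auto.
  rewrite IH by lia. unfold upd. destruct (Nat.eqb_spec v k); auto; lia.
Qed.

Lemma updl_seq : forall ds env k, map (updl env k ds) (seq k (length ds)) = ds.
Proof.
  induction ds as [|d ds IH]; cbn; intros env k; auto.
  rewrite IH. rewrite updl_lt by lia. now rewrite upd_same.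
Qed.

Lemma forall_list_seq : forall n k env (body : form C P),
  sat ic ip env (forall_list (seq k n) body) <-> forall ds, length ds = n -> sat ic ip (updl env k ds) body.
Proof.
  induction n as [|n IH]; intros k env body; cbn.
  - split; [intros H [|d ds] Hl; cbn in *; auto; discriminate|intros H; apply (H [])]; auto.
  - split.
    + intros H [|d ds] Hl; cbn in Hl; try discriminate. cbn. apply IH; auto.
    + intros H d. apply IH. intros ds Hl. apply (H (d :: ds)). cbn; auto.
Qed.

Lemma sat_SPP ar cs ps env : sat ic ip env (SPP ar cs ps) <-> sppK ar ps cs ic ip.
Proof.
  unfold SPP. rewrite sat_bigand. split.
  - intros H p ds Hp Hl Hip d Hd.
    specialize (H _ (in_map _ _ _ Hp)). cbv beta in H. rewrite forall_list_seq in H.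
    specialize (H ds Hl). cbn [sat] in H.
    rewrite map_map in H. cbn [term_val] in H. rewrite <- Hl in H. rewrite updl_seq in H.
    specialize (H Hip). rewrite sat_in_c in H.
    rewrite <- (updl_seq ds env 0) in Hd. apply in_map_iff in Hd. destruct Hd as [x [<- Hx]].
    destruct (H x Hx) as [c [Hc E]]. exists c; auto.
  - intros H f Hf. apply in_map_iff in Hf. destruct Hf as [p [<- Hp]].
    rewrite forall_list_seq. intros ds Hl. cbn [sat].
    rewrite map_map. cbn [term_val]. rewrite <- Hl, updl_seq. intros Hip.
    rewrite sat_in_c. intros x Hx.
    assert (Hin : In (updl env 0 ds x) ds).
    { rewrite <- (updl_seq ds env 0) at 2. now apply in_map. }
    destruct (H p ds Hp Hl Hip _ Hin) as [c [Hc E]]. eauto.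
Qed.

End SPPsem.

Lemma SM_env {C P D} ar (ic : C -> D) ip (F : form C P) env env' : sentence F ->
  sat_SM ar ic ip env F -> sat_SM ar ic ip env' F.
Proof.
  intros Hs [H1 H2].
  assert (E : forall U, satS ic ip U env F <-> satS ic ip U env' F).
  { intros U. apply satS_env. intros x Hx. exfalso. apply (Hs x Hx). }
  split.
  - rewrite <- satS_sat in *. now apply E.
  - intros [U [a [b c]]]. apply H2. exists U. repeat split; auto.
    rewrite sat_star in *. now apply E.
Qed.

Lemma SM_spp {C P D} ar (ic : C -> D) ip env (F : form C P) pre M :
  F = prenex pre M -> qfree M -> okf ar (preds F) M -> incl (consts M) (consts F) ->
  (forall x, sp_restricted x M) ->
  sat_SM ar ic ip env F -> sppK ar (preds F) (consts F) ic ip.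
Proof.
  intros HF Hq Hok Hc Hsp [S NS] p ds Hp Hl Hip d Hd.
  apply NNPP; intros Hnd. apply NS. exists (U0 (consts F) ic ip). split; [|split].
  - intros p' _ ds' _ [H _]; exact H.
  - intros Hall. apply Hnd. apply (Hall p Hp ds Hl) in Hip. destruct Hip as [_ H]; apply H; auto.
  - rewrite sat_star. rewrite <- satS_sat in S.
    pose proof (stepA_pre ar (preds F) (consts F) ic ip M Hq Hok Hc Hsp pre env) as Hg.
    rewrite <- HF in Hg. apply Hg. now apply satS_sat.
Qed.

Lemma Forall2_flip' {A B} (R : A -> B -> Prop) : forall l1 l2,
  Forall2 (fun b a => R a b) l2 l1 -> Forall2 R l1 l2.
Proof. intros l1 l2 H. induction H; constructor; auto. Qed.

Lemma invariance {C P} ar (F : form C P) pre M :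
  F = prenex pre M -> qfree M -> okf ar (preds F) M -> incl (consts M) (consts F) ->
  NoDup (map snd pre) ->
  (forall x, In (QAll, x) pre -> occ_covered (condA x) x true M) ->
  (forall x, In (QEx, x) pre -> occ_covered (condE x) x true M) ->
  sentence F ->
  forall {D1 D2} (ic1 : C -> D1) ip1 env1 (ic2 : C -> D2) ip2 env2,
  sppK ar (preds F) (consts F) ic1 ip1 -> sppK ar (preds F) (consts F) ic2 ip2 ->
  (forall c c', In c (consts F) -> In c' (consts F) -> (ic1 c = ic1 c' <-> ic2 c = ic2 c')) ->
  (forall p cl, In p (preds F) -> length cl = ar p -> incl cl (consts F) ->
     (ip1 p (map ic1 cl) <-> ip2 p (map ic2 cl))) ->
  sat_SM ar ic1 ip1 env1 F -> sat_SM ar ic2 ip2 env2 F.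
Proof.
  intros HF Hq Hok Hc Hnd HA HE Hsent D1 D2 ic1 ip1 env1 ic2 ip2 env2 Hs1 Hs2 Hteq Htat HSM.
  set (cs := consts F) in *. set (ps := preds F) in *.
  assert (He : exists e1 e2, forall c, In c cs -> (e1 = ic1 c <-> e2 = ic2 c)).
  { destruct (classic (exists c, In c cs)) as [[c0 Hc0]|Hno].
    - exists (ic1 c0), (ic2 c0). intros c Hcc. apply Hteq; auto.
    - exists (env1 0), (env2 0). intros c Hcc. exfalso; eauto. }
  destruct He as [e1 [e2 Hcomp]].
  set (R := fun d1 d2 => (exists c, In c cs /\ d1 = ic1 c /\ d2 = ic2 c) \/ (d1 = e1 /\ d2 = e2)).
  assert (HReq : forall a1 a2 b1 b2, R a1 a2 -> R b1 b2 -> (a1 = b1 <-> a2 = b2)).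
  { intros a1 a2 b1 b2 [[c [Hc1 [-> ->]]]|[-> ->]] [[c' [Hc2 [-> ->]]]|[-> ->]].
    - apply Hteq; auto.
    - specialize (Hcomp c Hc1). split; intros E; symmetry; apply Hcomp; auto.
    - apply Hcomp; auto.
    - tauto. }
  assert (HRc : forall c, In c cs -> R (ic1 c) (ic2 c)) by (intros c Hcc; left; eauto).
  assert (Rfun : forall a b b', R a b -> R a b' -> b = b').
  { intros a b b' H1 H2. apply (HReq a b a b'); auto. }
  assert (Rfunl : forall l l1 l2, Forall2 R l l1 -> Forall2 R l l2 -> l1 = l2).
  { intros l l1 l2 H1. revert l2. induction H1; intros l2 H2; inversion H2; subst; auto.
    f_equal; eauto. }
  assert (Rn1 : forall d1 d2, R d1 d2 -> N cs ic1 d1 -> exists c, In c cs /\ d1 = ic1 c /\ d2 = ic2 c).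
  { intros d1 d2 [H|[-> ->]] [c [Hcc E]]; auto. exists c; repeat split; auto. apply Hcomp; auto. }
  assert (Rn2 : forall d1 d2, R d1 d2 -> N cs ic2 d2 -> exists c, In c cs /\ d1 = ic1 c /\ d2 = ic2 c).
  { intros d1 d2 [H|[-> ->]] [c [Hcc E]]; auto. exists c; repeat split; auto. apply Hcomp; auto. }
  assert (L1 : forall ds1 ds2, Forall2 R ds1 ds2 -> (forall d, In d ds1 -> N cs ic1 d) ->
            exists cl, incl cl cs /\ ds1 = map ic1 cl /\ ds2 = map ic2 cl).
  { intros ds1 ds2 H. induction H as [|d1 d2 l1 l2 Hr Hl IH]; intros Hn.
    - exists []. cbn. split; auto. intros ? [].
    - destruct IH as [cl [Hi [-> ->]]]; [intros; apply Hn; now right|].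
      destruct (Rn1 d1 d2 Hr (Hn d1 (or_introl eq_refl))) as [c [Hcc [-> ->]]].
      exists (c :: cl). cbn. repeat split; auto. intros x [<-|Hx]; auto. }
  assert (L2 : forall ds1 ds2, Forall2 R ds1 ds2 -> (forall d, In d ds2 -> N cs ic2 d) ->
            exists cl, incl cl cs /\ ds1 = map ic1 cl /\ ds2 = map ic2 cl).
  { intros ds1 ds2 H. induction H as [|d1 d2 l1 l2 Hr Hl IH]; intros Hn.
    - exists []. cbn. split; auto. intros ? [].
    - destruct IH as [cl [Hi [-> ->]]]; [intros; apply Hn; now right|].
      destruct (Rn2 d1 d2 Hr (Hn d2 (or_introl eq_refl))) as [c [Hcc [-> ->]]].
      exists (c :: cl). cbn. repeat split; auto. intros x [<-|Hx]; auto. }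
  assert (Lmap : forall cl, incl cl cs -> Forall2 R (map ic1 cl) (map ic2 cl)).
  { induction cl as [|c cl IH]; intros Hi; cbn; constructor.
    - apply HRc, Hi; now left.
    - apply IH. intros x Hx; apply Hi; now right. }
  assert (Lnamed2 : forall ds2, (forall d, In d ds2 -> N cs ic2 d) -> exists cl, incl cl cs /\ ds2 = map ic2 cl).
  { induction ds2 as [|d ds2 IH]; intros Hn.
    - exists []; cbn; split; auto; intros ? [].
    - destruct IH as [cl [Hi ->]]; [intros; apply Hn; now right|].
      destruct (Hn d (or_introl eq_refl)) as [c [Hcc ->]].
      exists (c :: cl); cbn; split; auto. intros x [<-|Hx]; auto. }
  assert (Htr : transR ar ps R ip1 ip2).
  { intros p ds1 ds2 Hp Hl HF2. split; intros H.
    - destruct (L1 ds1 ds2 HF2 (Hs1 p ds1 Hp Hl H)) as [cl [Hi [-> ->]]].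
      apply Htat; auto. now rewrite length_map in Hl.
    - assert (Hl2 : length ds2 = ar p) by (rewrite <- (Forall2_length HF2); auto).
      destruct (L2 ds1 ds2 HF2 (Hs2 p ds2 Hp Hl2 H)) as [cl [Hi [-> ->]]].
      apply Htat; auto. now rewrite length_map in Hl. }
  assert (HReq' : forall a1 a2 b1 b2, R a2 a1 -> R b2 b1 -> (a1 = b1 <-> a2 = b2)).
  { intros. symmetry. apply HReq; auto. }
  assert (HRc' : forall c, In c cs -> R (ic1 c) (ic2 c)) by auto.
  assert (flipT : forall (K1 : P -> list D1 -> Prop) (K2 : P -> list D2 -> Prop),
            transR ar ps R K1 K2 -> transR ar ps (fun a b => R b a) K2 K1).
  { intros K1 K2 H p ds2 ds1 Hp Hl HF2. apply Forall2_flip' in HF2.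
    symmetry. apply H; auto. rewrite (Forall2_length HF2); auto. }
  assert (HSM1 : sat_SM ar ic1 ip1 (fun _ => e1) F) by (eapply SM_env; eauto).
  apply (SM_env ar ic2 ip2 F (fun _ => e2) env2 Hsent).
  destruct HSM1 as [S1 NS1].
  assert (Rall : forall v : nat, R ((fun _ => e1) v) ((fun _ => e2) v)) by (intros; right; auto).
  split.
  - rewrite <- satS_sat. rewrite HF.
    apply (transfer_pre ar ps cs ic1 ic2 R HReq HRc M Hq Hok Hc ip1 ip2 ip1 ip2 Hs1 Hs2
             (HUr_refl ar ps ip1) (HUr_refl ar ps ip2) Htr Htr pre Hnd HA HE _ _ Rall).
    rewrite satS_sat, <- HF. exact S1.
  - intros [U2 [HU2 [Hne Hst]]]. apply NS1.
    set (U1 := fun p ds1 => exists ds2, Forall2 R ds1 ds2 /\ U2 p ds2).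
    assert (HtrU : transR ar ps R U1 U2).
    { intros p ds1 ds2 Hp Hl HF2. split.
      - intros [ds2' [HF' HU']]. rewrite (Rfunl _ _ _ HF2 HF'). exact HU'.
      - intros H. exists ds2; auto. }
    assert (HU1 : forall p, In p ps -> forall ds, length ds = ar p -> U1 p ds -> ip1 p ds).
    { intros p Hp ds1 Hl [ds2 [HF2 HU]]. apply (Htr p ds1 ds2 Hp Hl HF2).
      apply HU2; auto. rewrite <- (Forall2_length HF2); auto. }
    exists U1. split; [exact HU1|split].
    + intros Hall. apply Hne. intros p Hp ds2 Hl. split; [apply HU2; auto|]. intros Hip2.
      destruct (Lnamed2 ds2 (Hs2 p ds2 Hp Hl Hip2)) as [cl [Hi ->]].
      assert (Hl1 : length (map ic1 cl) = ar p) by (rewrite length_map in *; auto).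
      assert (Hip1 : ip1 p (map ic1 cl)) by (apply (Htr p _ _ Hp Hl1 (Lmap cl Hi)); auto).
      apply (Hall p Hp _ Hl1) in Hip1. apply (HtrU p _ _ Hp Hl1 (Lmap cl Hi)). exact Hip1.
    + rewrite sat_star. rewrite HF.
      assert (HU2' : HUr ar ps ip2 U2) by (intros p ds Hp Hl H; apply HU2; auto).
      assert (HU1' : HUr ar ps ip1 U1) by (intros p ds Hp Hl H; apply HU1; auto).
      apply (transfer_pre ar ps cs ic2 ic1 (fun a b => R b a) HReq' HRc' M Hq Hok Hc ip2 ip1 U2 U1 Hs2 Hs1
               HU2' HU1' (flipT _ _ Htr) (flipT _ _ HtrU) pre Hnd HA HE (fun _ => e2) (fun _ => e1)
               ltac:(intros; right; auto)).
      rewrite <- HF, <- sat_star. exact Hst.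
Qed.

Fixpoint tuples {C} (cs : list C) (n : nat) : list (list C) :=
  match n with
  | 0 => [[]]
  | S n => flat_map (fun c => map (cons c) (tuples cs n)) cs
  end.

Lemma in_tuples {C} (cs : list C) : forall n cl, length cl = n -> incl cl cs -> In cl (tuples cs n).
Proof.
  induction n as [|n IH]; intros [|c cl] Hl Hi; cbn in *; try discriminate; auto.
  apply in_flat_map. exists c. split; [apply Hi; now left|].
  apply in_map. apply IH; [lia|]. intros x Hx; apply Hi; now right.
Qed.

Lemma tuples_len {C} (cs : list C) : forall n cl, In cl (tuples cs n) -> length cl = n.
Proof.
  induction n as [|n IH]; intros cl H; cbn in *.
  - destruct H as [<-|[]]; auto.
  - apply in_flat_map in H. destruct H as [c [_ H]]. apply in_map_iff in H.
    destruct H as [cl' [<- H]]. cbn. f_equal. auto.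
Qed.

Fixpoint allbools (n : nat) : list (list bool) :=
  match n with
  | 0 => [[]]
  | S n => map (cons true) (allbools n) ++ map (cons false) (allbools n)
  end.

Lemma in_allbools : forall n s, length s = n -> In s (allbools n).
Proof.
  induction n as [|n IH]; intros [|b s] Hl; cbn in *; try discriminate; auto.
  apply in_or_app. destruct b; [left|right]; apply in_map; apply IH; lia.
Qed.

Fixpoint desc {C P} (L : list (form C P)) (s : list bool) : form C P :=
  match L, s with
  | A :: L', b :: s' => FAnd (if b then A else FImp A FBot) (desc L' s')
  | _, _ => FTop
  end.

Lemma realize {C P D} (ic : C -> D) ip env : forall L : list (form C P),
  exists s, length s = length L /\ sat ic ip env (desc L s).
Proof.
  induction L as [|A L IH].
  - exists []. cbn. split; auto.
  - destruct IH as [s [Hl Hs]]. destruct (classic (sat ic ip env A)) as [H|H].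
    + exists (true :: s). cbn. auto.
    + exists (false :: s). cbn. auto.
Qed.

Lemma desc_agree {C P D1 D2} (ic1 : C -> D1) ip1 env1 (ic2 : C -> D2) ip2 env2 :
  forall (L : list (form C P)) s, length s = length L ->
  sat ic1 ip1 env1 (desc L s) -> sat ic2 ip2 env2 (desc L s) ->
  forall A, In A L -> (sat ic1 ip1 env1 A <-> sat ic2 ip2 env2 A).
Proof.
  induction L as [|B L IH]; intros [|b s] Hl H1 H2 A HA; cbn in *; try discriminate; try contradiction.
  destruct H1 as [H1 H1'], H2 as [H2 H2'].
  destruct HA as [<-|HA].
  - destruct b; cbn in *; tauto.
  - apply (IH s); auto.
Qed.

Lemma filter_ex {A} (Q : A -> Prop) : forall l, exists l', forall x, In x l' <-> In x l /\ Q x.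
Proof.
  induction l as [|a l IH].
  - exists []. cbn. tauto.
  - destruct IH as [l' H]. destruct (classic (Q a)) as [Ha|Ha].
    + exists (a :: l'). intros x. cbn. rewrite H. split; [intros [<-|?]; tauto|].
      intros [[<-|?] ?]; tauto.
    + exists l'. intros x. cbn. rewrite H. split; [tauto|]. intros [[<-|?] ?]; tauto.
Qed.

Definition GA {C P} (ar : P -> nat) (cs : list C) (ps : list P) : list (form C P) :=
  map (fun pr => FEq (Cst (fst pr)) (Cst (snd pr))) (list_prod cs cs) ++
  flat_map (fun p => map (fun cl => FAtom p (map Cst cl)) (tuples cs (ar p))) ps.

Lemma GA_ok {C P} ar (cs : list C) (ps : list P) : forall A, In A (GA ar cs ps) -> wf ar A /\ var_free A.
Proof.
  intros A H. unfold GA in H. apply in_app_or in H. destruct H as [H|H].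
  - apply in_map_iff in H. destruct H as [pr [<- _]]. cbn. auto.
  - apply in_flat_map in H. destruct H as [p [_ H]]. apply in_map_iff in H.
    destruct H as [cl [<- H]]. cbn. split.
    + rewrite length_map. eapply tuples_len; eauto.
    + clear. induction cl; cbn; auto.
Qed.

Lemma desc_ok {C P} ar : forall (L : list (form C P)) s, (forall A, In A L -> wf ar A /\ var_free A) ->
  wf ar (desc L s) /\ var_free (desc L s).
Proof.
  induction L as [|A L IH]; intros [|b s] H; cbn; try tauto.
  destruct (H A (or_introl eq_refl)). destruct (IH s); [intros; apply H; now right|].
  destruct b; cbn; tauto.
Qed.

Lemma bigor_ok {C P} ar : forall l : list (form C P), (forall A, In A l -> wf ar A /\ var_free A) ->
  wf ar (bigor l) /\ var_free (bigor l).
Proof.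
  induction l as [|A l IH]; intros H; cbn; auto.
  destruct (H A (or_introl eq_refl)). destruct IH; [intros; apply H; now right|]. tauto.
Qed.

Theorem proposition4 (C P : Type) (ar : P -> nat) (F : form C P) :
  wf ar F -> sentence F -> safe F ->
  exists G : form C P,
    wf ar G /\ var_free G /\
    forall (D : Type) (ic : C -> D) (ip : P -> list D -> Prop) (env : nat -> D),
      sat_SM ar ic ip env F <->
      sat ic ip env (FAnd G (SPP ar (consts F) (preds F))).
Proof.
  intros Hwf Hsent Hsafe.
  destruct Hsafe as [_ [pre [M [HF [[Hq [Hnd Hsp]] [HA HE]]]]]].
  assert (Hok : okf ar (preds F) M).
  { apply wf_okf. - rewrite HF in Hwf. eapply prenex_wf; eauto.
    - rewrite HF, prenex_preds. intros x Hx; exact Hx. }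
  assert (Hc : incl (consts M) (consts F)) by (rewrite HF, prenex_consts; intros x Hx; exact Hx).
  assert (Hspall : forall x, sp_restricted x M).
  { intros x. destruct (classic (In x (map snd pre))) as [Hi|Hn]; auto.
    apply notfree_sp; auto. intros Hf. apply (Hsent x). rewrite HF. apply free_prenex; auto. }
  set (L := GA ar (consts F) (preds F)).
  set (good := fun s => exists (D : Type) (ic : C -> D) ip env,
                 sat ic ip env (desc L s) /\ sat_SM ar ic ip env F).
  destruct (filter_ex good (allbools (length L))) as [S HS].
  exists (bigor (map (desc L) S)).
  assert (Hok2 : wf ar (bigor (map (desc L) S)) /\ var_free (bigor (map (desc L) S))).
  { apply bigor_ok. intros A HA'. apply in_map_iff in HA'. destruct HA' as [s [<- _]].
    apply desc_ok. apply GA_ok. }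
  split; [tauto|split; [tauto|]].
  intros D ic ip env. cbn [sat]. rewrite sat_SPP. split.
  - intros HSM. split; [|eapply SM_spp; eauto].
    apply sat_bigor. destruct (realize ic ip env L) as [s [Hl Hd]].
    exists (desc L s). split; auto. apply in_map. apply HS. split.
    + apply in_allbools; auto.
    + exists D, ic, ip, env. auto.
  - intros [HG Hspp]. apply sat_bigor in HG. destruct HG as [f [Hin Hf]].
    apply in_map_iff in Hin. destruct Hin as [s [<- Hin]]. apply HS in Hin.
    destruct Hin as [Hall [D' [ic' [ip' [env' [Hd' HSM']]]]]].
    assert (Hl : length s = length L).
    { clear -Hall. revert s Hall. generalize (length L). induction n as [|n IH]; intros s H; cbn in H.
      - destruct H as [<-|[]]; auto.
      - apply in_app_or in H. destruct H as [H|H]; apply in_map_iff in H;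
          destruct H as [s' [<- H]]; cbn; f_equal; auto. }
    pose proof (desc_agree ic' ip' env' ic ip env L s Hl Hd' Hf) as Hag.
    apply (invariance ar F pre M HF Hq Hok Hc Hnd HA HE Hsent ic' ip' env' ic ip env); auto.
    + eapply SM_spp; eauto.
    + intros c c' Hc1 Hc2.
      apply (Hag (FEq (Cst c) (Cst c'))). unfold L, GA. apply in_or_app. left.
      apply in_map_iff. exists (c, c'). split; auto. apply in_prod; auto.
    + intros p cl Hp Hl' Hi.
      pose proof (Hag (FAtom p (map Cst cl))) as Hx. cbn [sat] in Hx. rewrite !map_map in Hx.
      cbn [term_val] in Hx. apply Hx.
      unfold L, GA. apply in_or_app. right. apply in_flat_map. exists p. split; auto.
      apply in_map_iff. exists cl. split; auto. apply in_tuples; auto.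
Qed.
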